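(* Let $R=k[x_1,\dots,x_n]$ be graded by a monoid $P$, let $I\subset R$ be a $P$-homogeneous ideal, and let $\preceq$ be a monomial order. Let $G$ be a group acting on $R$ by permuting variables, acting monomially on $I$ up to degree $d$ and transitively on a set of variables $e_1,\dots,e_m$ (with $\deg(e_i)=\underline e_i\in P$). Let $Q\subseteq\mathrm{in}_{\preceq}(I)$ be a monomial ideal with generators of total degree at most $d$. Suppose: (1) $e_1$ is a nonzerodivisor in $R/Q$; (2) for all $g\in G$, $HS(R/Q,t)=HS(R/g(Q),t)$; (3) for all $D\in P$ there are natural numbers $a_1,\dots,a_m$ such that $\dim_k Q_{D+\sum_ia_i\underline e_i}=\dim_k I_{D+\sum_ia_i\underline e_i}$. Then $Q=\mathrm{in}_{\preceq}(I)$.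
   Context: $R$ is graded by a monoid $P$ such that every monomial is $P$-homogeneous, the $P$-grading refines the standard grading, and each graded piece is finite dimensional. For a $P$-graded module $N$, $HS(N,t)=\sum_{D\in P}\dim_k(N_D)t^D$. For $h\in R$, $\mathrm{mon}(h)$ is the set of monomials of $h$ with nonzero coefficient; $G$ acts monomially on $I$ up to degree $d$ if for every $h\in I$ of standard degree $\le d$ and every $g\in G$ there is $h'\in I$ with $\mathrm{mon}(h')=\mathrm{mon}(g(h))$. *)

(* Defs.v *)
From HB Require Import structures.
From mathcomp Require Import all_boot all_order all_algebra all_fingroup.
From mathcomp Require Import mpoly.
Set Implicit Arguments. Unset Strict Implicit. Unset Printing Implicit Defensive.
Import GRing.Theory.
Local Open Scope ring_scope.

Section Defs.
Variables (k : fieldType) (n : nat).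
Local Notation R := {mpoly k[n]}.

Definition is_ideal (I : R -> Prop) : Prop :=
  [/\ I 0, (forall f g, I f -> I g -> I (f + g)) & (forall f g, I g -> I (f * g))].

Definition ideal_gen (S : R -> Prop) : R -> Prop :=
  fun f => forall J, is_ideal J -> (forall x, S x -> J x) -> J f.

Definition monomial_ideal (Gs : 'X_{1..n} -> Prop) : R -> Prop :=
  ideal_gen (fun f => exists m, Gs m /\ f = 'X_[m]).

Definition monomial_order (le : rel 'X_{1..n}) : Prop :=
  [/\ reflexive le, antisymmetric le, transitive le, total le &
      (forall m, le 0%MM m) /\
      (forall m1 m2 m, le m1 m2 -> le (m1 + m)%MM (m2 + m)%MM)].

Definition is_lead (le : rel 'X_{1..n}) (h : R) (m : 'X_{1..n}) : Prop :=
  m \in msupp h /\ forall m', m' \in msupp h -> le m' m.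

Definition initial_ideal (le : rel 'X_{1..n}) (I : R -> Prop) : R -> Prop :=
  ideal_gen (fun f => exists h m, [/\ I h, h != 0, is_lead le h m & f = 'X_[m]]).

Variables (P : nmodType) (degP : 'X_{1..n} -> P).

(* P-grading of R: every monomial is P-homogeneous, degree is a monoid morphism,
   the P-grading refines the standard grading, graded pieces finite dimensional *)
Definition monoid_grading : Prop :=
  [/\ degP 0%MM = 0,
      (forall m1 m2, degP (m1 + m2)%MM = degP m1 + degP m2),
      (forall m1 m2, degP m1 = degP m2 -> mdeg m1 = mdeg m2) &
      (forall D, exists s : seq 'X_{1..n}, forall m, degP m = D -> m \in s)].

Definition is_homogP (D : P) (f : R) : Prop := forall m, m \in msupp f -> degP m = D.

Definition hcomp (D : P) (f : R) : R :=
  \sum_(m <- msupp f | degP m == D) f@_m *: 'X_[m].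

Definition P_homogeneous_ideal (I : R -> Prop) : Prop :=
  is_ideal I /\ forall f D, I f -> I (hcomp D f).

(* dim_k (V / W) >= r : there are r elements of V linearly independent modulo W *)
Definition qdim_ge (V W : R -> Prop) (r : nat) : Prop :=
  exists s : r.-tuple R, (forall i, V (tnth s i)) /\
    forall c : 'I_r -> k, W (\sum_(i < r) c i *: tnth s i) -> forall i, c i = 0.

Definition dim_ge (V : R -> Prop) (r : nat) : Prop := qdim_ge V (fun f => f = 0) r.

(* dim_k I_D = dim_k J_D (the graded pieces are finite dimensional) *)
Definition dim_piece_eq (I J : R -> Prop) (D : P) : Prop :=
  forall r, dim_ge (fun f => is_homogP D f /\ I f) r <-> dim_ge (fun f => is_homogP D f /\ J f) r.

(* HS(R/Q, t) = HS(R/Q', t): dim_k (R/Q)_D = dim_k (R/Q')_D for all D *)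
Definition HS_quot_eq (Q Q' : R -> Prop) : Prop :=
  forall D r, qdim_ge (is_homogP D) Q r <-> qdim_ge (is_homogP D) Q' r.

End Defs.

Definition perm_image (k : fieldType) n (g : 'S_n) (Q : {mpoly k[n]} -> Prop) :=
  fun f => exists q, Q q /\ f = msym g q.

Definition acts_monomially (k : fieldType) n (G : {group 'S_n})
    (I : {mpoly k[n]} -> Prop) (d : nat) : Prop :=
  forall h g, I h -> (msize h <= d.+1)%N -> g \in G ->
    exists h', I h' /\ msupp h' =i msupp (msym g h).

(* Main.v *)
Require Import Defs.
From HB Require Import structures.
From mathcomp Require Import all_boot all_order all_algebra all_fingroup.
From mathcomp Require Import mpoly zify.
From Stdlib Require Import Classical ClassicalEpsilon.
Import GRing.Theory.
Local Open Scope ring_scope.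

Set Implicit Arguments. Unset Strict Implicit. Unset Printing Implicit Defensive.

Definition pb (A : Prop) : bool := if excluded_middle_informative A then true else false.
Lemma pbP A : reflect A (pb A).
Proof. by rewrite /pb; case: excluded_middle_informative => h; constructor. Qed.

Lemma list_max (T : eqType) (r : rel T) (s : seq T) :
  total r -> transitive r -> s != [::] ->
  exists2 x, x \in s & forall y, y \in s -> r y x.
Proof.
move=> tot tr; elim: s => // a s IH _.
have raa : r a a by have := tot a a; rewrite orbb.
case: (eqVneq s [::]) => [->|/IH [x xs hx]].
  exists a; first by rewrite mem_seq1.
  by move=> y; rewrite mem_seq1 => /eqP ->.
case/orP: (tot a x) => hax.
  exists x; first by rewrite inE xs orbT.
  by move=> y; rewrite inE => /orP [/eqP -> //|]; exact: hx.
exists a; first by rewrite inE eqxx.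
move=> y; rewrite inE => /orP [/eqP -> //|ys].
exact: tr (hx _ ys) hax.
Qed.

Section Gen.
Variables (k : fieldType) (n : nat).
Local Notation R := {mpoly k[n]}.
Implicit Types (f h v : R) (m : 'X_{1..n}).

Lemma mem_filterM (a : pred 'X_{1..n}) (s : seq 'X_{1..n}) m :
  (m \in filter a s) = a m && (m \in s).
Proof. exact: mem_filter. Qed.

Lemma msupp_zero : msupp (0 : R) = [::].
Proof. by apply/eqP; rewrite msupp_eq0. Qed.

Lemma lead_exists (le : rel 'X_{1..n}) v :
  total le -> transitive le -> v != 0 -> exists m, is_lead le v m.
Proof.
move=> tot tr nz; have : msupp v != [::] by rewrite msupp_eq0.
by case/(list_max tot tr) => m mi hm; exists m; split.
Qed.

Lemma msuppBZ f g c m :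
  m \in msupp (f - c *: g) -> m \in msupp f \/ m \in msupp g.
Proof.
by move/msuppB_le; rewrite mem_cat => /orP [->|/msuppZ_le ->]; [left|right].
Qed.

Definition mchar (W : R -> Prop) (A : 'X_{1..n} -> Prop) :=
  forall f, W f <-> (forall m, m \in msupp f -> A m).

Lemma mchar0 W A : mchar W A -> W 0.
Proof. by move=> hW; apply/hW => m; rewrite msupp_zero. Qed.

Lemma mchar_closed W A : mchar W A ->
  forall a b c, W a -> W b -> W (a - c *: b).
Proof.
move=> hW a b c /hW ha /hW hb; apply/hW => m /msuppBZ [] ?;
  [exact: ha|exact: hb].
Qed.

Lemma mcharX W A m : mchar W A -> W 'X_[m] <-> A m.
Proof.
move=> hW; split; first by move/hW; apply; rewrite msuppX mem_seq1.
by move=> Am; apply/hW => m'; rewrite msuppX mem_seq1 => /eqP ->.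
Qed.

Lemma GL_le (V W : R -> Prop) (s : seq 'X_{1..n}) r (t : r.-tuple R) :
  W 0 -> (forall a b c, W a -> W b -> W (a - c *: b)) ->
  (forall a b c, V a -> V b -> V (a - c *: b)) ->
  (forall v, V v -> ~ W v -> exists2 m, m \in s & m \in msupp v) ->
  uniq s -> (forall i, V (tnth t i)) ->
  (forall c : 'I_r -> k, W (\sum_(i < r) c i *: tnth t i) -> forall i, c i = 0) ->
  (r <= size s)%N.
Proof.
move=> W0 Wc; have [N] := ubnP (size s).
elim: N s V r t => // N IH s V r t ltsN Vc hm us Vt ind.
case: r t Vt ind => // r t Vt ind.
pose t0 := tnth t ord0.
have nW0 : ~ W t0.
  move=> Wt0; have := ind (fun i => if i == ord0 then 1 else 0).
  rewrite big_ord_recl eqxx scale1r big1 ?addr0 => [/(_ Wt0 ord0)|i _].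
    by rewrite eqxx => /eqP; rewrite oner_eq0.
  by rewrite eq_sym (negbTE (neq_lift _ _)) scale0r.
have [u us' ut0] := hm _ (Vt ord0) nW0.
have t0u : t0@_u != 0 by rewrite -mcoeff_msupp.
pose t' := [tuple (tnth t (lift ord0 i) - ((tnth t (lift ord0 i))@_u / t0@_u) *: t0) | i < r].
have sz : (0 < size s)%N by case: (s) us'.
suff : (r <= (size s).-1)%N by lia.
rewrite -(size_rem us'); apply: (IH (rem u s) (fun v => V v /\ v@_u = 0) r t').
- by rewrite size_rem //; move: ltsN; rewrite /= => ?; lia.
- move=> a b c [Va a0] [Vb b0]; split; first exact: Vc.
  by rewrite mcoeffB mcoeffZ a0 b0 mulr0 subr0.
- move=> v [Vv v0] nWv; have [m ms mv] := hm v Vv nWv; exists m => //.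
  rewrite mem_rem_uniq // inE ms andbT; apply/negP => /eqP emu.
  by move: mv; rewrite emu mcoeff_msupp v0 eqxx.
- exact: rem_uniq.
- move=> i; rewrite tnth_mktuple; split; first exact: Vc (Vt _) (Vt _).
  by rewrite mcoeffB mcoeffZ divfK // subrr.
- move=> c Wc'.
  pose lam := \sum_(i < r) c i * ((tnth t (lift ord0 i))@_u / t0@_u).
  pose c' := fun j : 'I_r.+1 => if unlift ord0 j is Some i then c i else - lam.
  have eq : \sum_(i < r) c i *: tnth t' i = \sum_(j < r.+1) c' j *: tnth t j.
    rewrite big_ord_recl /c' unlift_none.
    under [in RHS]eq_bigr => i _ do rewrite liftK.
    rewrite (eq_bigr (fun i => c i *: tnth t (lift ord0 i) -
        (c i * ((tnth t (lift ord0 i))@_u / t0@_u)) *: t0)); last first.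
      by move=> i _; rewrite tnth_mktuple scalerBr scalerA.
    by rewrite sumrB -scaler_suml addrC scaleNr.
  move=> i; have := ind c' _ (lift ord0 i); rewrite /c' liftK; apply.
  by rewrite -eq.
Qed.

Lemma GL_ge (le : rel 'X_{1..n}) (W : R -> Prop) r (t : 'I_r -> R)
    (l : 'I_r -> 'X_{1..n}) :
  antisymmetric le -> transitive le -> total le ->
  injective l -> (forall i, is_lead le (t i) (l i)) ->
  (forall f, W f -> forall i, l i \notin msupp f) ->
  forall c : 'I_r -> k, W (\sum_(i < r) c i *: t i) -> forall i, c i = 0.
Proof.
move=> anti tr tot linj hl hW c Wc.
case: (pickP (fun i => c i != 0)) => [i0 ci0 | h]; last first.
  by move=> i; apply/eqP; rewrite -[_ == _]negbK h.
have [] := @list_max _ (fun i j => le (l i) (l j))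
   [seq i <- enum 'I_r | c i != 0].
- by move=> i j; exact: tot.
- by move=> y x z; exact: tr.
- apply/eqP => h0.
  have : i0 \in [seq i <- enum 'I_r | c i != 0] by rewrite mem_filter ci0 mem_enum.
  by rewrite h0.
move=> j; rewrite mem_filter mem_enum andbT => cj hj.
exfalso; move/negP: (hW _ Wc j); apply.
rewrite mcoeff_msupp raddf_sum (bigD1 j) //= big1 ?addr0.
  by rewrite mcoeffZ mulf_neq0 // -mcoeff_msupp; case: (hl j).
move=> i neij; rewrite mcoeffZ.
case: (eqVneq (c i) 0) => [->|ci]; first by rewrite mul0r.
have lij : le (l i) (l j) by apply: hj; rewrite mem_filter ci mem_enum.
case: (boolP (l j \in msupp (t i))) => [lji|]; last first.
  by rewrite mcoeff_msupp negbK => /eqP ->; rewrite mulr0.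
have lji' := (hl i).2 _ lji.
have : l i = l j by apply: anti; rewrite lij lji'.
by move/linj => eij; rewrite eij eqxx in neij.
Qed.

Lemma mono_indep (W : R -> Prop) r (l : 'I_r -> 'X_{1..n}) :
  injective l ->
  (forall f, W f -> forall i, l i \notin msupp f) ->
  forall c : 'I_r -> k, W (\sum_(i < r) c i *: 'X_[l i]) -> forall i, c i = 0.
Proof.
move=> linj hW c Wc i; apply/eqP; apply: contraT => ci.
case/negP: (hW _ Wc i).
rewrite mcoeff_msupp raddf_sum (bigD1 i) //= big1 ?addr0.
  by rewrite mcoeffZ mcoeffX eqxx mulr1.
move=> j nji; rewrite mcoeffZ mcoeffX.
case: (eqVneq (l j) (l i)) => [/linj e|_]; last by rewrite mulr0.
by rewrite e eqxx in nji.
Qed.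

End Gen.
Section Ideals.
Variables (k : fieldType) (n : nat).
Local Notation R := {mpoly k[n]}.
Implicit Types (f h v : R) (m : 'X_{1..n}).

Definition AM (Gs : 'X_{1..n} -> Prop) m := exists2 q, Gs q & (q <= m)%MM.

Lemma monomial_idealP (Gs : 'X_{1..n} -> Prop) :
  mchar (@monomial_ideal k n Gs) (AM Gs).
Proof.
move=> f; split.
- move=> hf; apply: (hf (fun f => forall m, m \in msupp f -> AM Gs m)).
  + split.
    * by move=> m; rewrite msupp_zero.
    * move=> a b ha hb m /msuppD_le; rewrite mem_cat => /orP [] ?;
        [exact: ha|exact: hb].
    * move=> a b hb m /msuppM_le /allpairsP [[m1 m2]] /= [_ m2b ->].
      have [q Gq qm] := hb _ m2b; exists q => //.
      by apply: lepm_trans qm _; rewrite addmC; apply: lem_addr.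
  + move=> x [m [Gm ->]] m'; rewrite msuppX mem_seq1 => /eqP ->.
    by exists m => //; apply: lepm_refl.
- move=> hA J [J0 JD JM] JS.
  rewrite (mpolyE f) big_seq; apply: (big_ind J) => // m mf.
  have [q Gq qm] := hA m mf.
  rewrite -(submK qm) mpolyXD scalerAl; apply: JM; apply: JS.
  by exists q.
Qed.

Lemma ideal_gen_ext (S1 S2 : R -> Prop) :
  (forall x, S1 x <-> S2 x) -> forall f, ideal_gen S1 f <-> ideal_gen S2 f.
Proof.
move=> h f; split=> hf J hJ hS; apply: hf => // x /h; exact: hS.
Qed.

Definition LM (le : rel 'X_{1..n}) (I : R -> Prop) m :=
  exists h, [/\ I h, h != 0 & is_lead le h m].

Lemma initial_idealP le I : mchar (initial_ideal le I) (AM (LM le I)).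
Proof.
move=> f; rewrite -(monomial_idealP (LM le I) f); apply: ideal_gen_ext => x.
split.
- by case=> h [m [Ih nz hl ->]]; exists m; split => //; exists h.
- by case=> m [[h [Ih nz hl]] ->]; exists h, m.
Qed.

Definition mp (g : 'S_n) m : 'X_{1..n} := [multinom m (g i) | i < n].

Lemma mpK g m : mp g (mp g^-1 m) = m.
Proof. exact: (mpermK g m). Qed.

Lemma mpKV g m : mp g^-1 (mp g m) = m.
Proof. exact: (mpermKV g m). Qed.

Lemma mp_inj g : injective (mp g).
Proof. exact: mperm_inj. Qed.

Lemma mpD g m1 m2 : mp g (m1 + m2)%MM = (mp g m1 + mp g m2)%MM.
Proof. by apply/mnmP => i; rewrite !mnmE. Qed.

Lemma mp0 g : mp g 0%MM = 0%MM.
Proof. by apply/mnmP => i; rewrite !mnmE. Qed.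

Lemma mpE g m i : mp g m i = m (g i).
Proof. by rewrite mnmE. Qed.

Lemma msupp_msym g f m : (m \in msupp (msym g f)) = (mp g m \in msupp f).
Proof. by rewrite !mcoeff_msupp mcoeff_sym. Qed.

Lemma perm_imageP g (W : R -> Prop) A :
  mchar W A -> mchar (perm_image g W) (fun m => A (mp g m)).
Proof.
move=> hW f; split.
- by case=> q [Wq ->] m; rewrite msupp_msym => mq; exact: (hW q).1 Wq _ mq.
- move=> hA; exists (msym g^-1 f); split; last first.
    by rewrite -msymMm mulVg msym1m.
  apply/hW => m; rewrite msupp_msym => /hA; by rewrite mpK.
Qed.

End Ideals.
Section Orders.
Variables (k : fieldType) (n : nat).
Local Notation R := {mpoly k[n]}.
Implicit Types (f h v : R) (m : 'X_{1..n}).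

Definition le_g (le : rel 'X_{1..n}) (g : 'S_n) : rel 'X_{1..n} :=
  fun a b => le (mp g a) (mp g b).

Lemma monomial_order_g le g : monomial_order le -> monomial_order (le_g le g).
Proof.
move=> [lrefl lanti ltr ltot [l0 lcomp]]; split.
- by move=> x; exact: lrefl.
- by move=> x y /lanti /mp_inj.
- by move=> y x z; exact: ltr.
- by move=> x y; exact: ltot.
- split; first by move=> m; rewrite /le_g mp0.
  by move=> m1 m2 m; rewrite /le_g !mpD; exact: lcomp.
Qed.

Lemma lead_msym le g h h' m0 :
  is_lead le h m0 -> msupp h' =i msupp (msym g h) ->
  is_lead (le_g le g) h' (mp g^-1 m0).
Proof.
move=> [m0h hl] eq; split.
  by rewrite eq msupp_msym mpK.
by move=> m'; rewrite eq msupp_msym /le_g mpK; exact: hl.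
Qed.

Lemma sumX_coef (s : seq 'X_{1..n}) (Pr : pred 'X_{1..n}) (c : 'X_{1..n} -> k) x :
  uniq s ->
  (\sum_(m <- s | Pr m) c m *: ('X_[m] : R))@_x = if (x \in s) && Pr x then c x else 0.
Proof.
elim: s => [|a s IH] /=; first by rewrite big_nil mcoeff0.
case/andP=> ans us; have {}IH := IH us; rewrite big_cons inE.
move: IH; case: (eqVneq x a) => [->|nxa] IH /=.
  rewrite (negbTE ans) /= in IH.
  by case: (Pr a); rewrite ?mcoeffD ?mcoeffZ ?mcoeffX ?eqxx ?IH // mulr1 addr0.
case: (Pr a); rewrite ?mcoeffD ?mcoeffZ ?mcoeffX IH //.
by rewrite eq_sym (negbTE nxa) mulr0 add0r.
Qed.

Variables (P : nmodType) (degP : 'X_{1..n} -> P).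

Lemma hcompE D f x : (hcomp degP D f)@_x = if degP x == D then f@_x else 0.
Proof.
rewrite /hcomp sumX_coef ?msupp_uniq //.
case: (boolP (x \in msupp f)) => //= xf.
by case: ifP => // _; move: xf; rewrite mcoeff_msupp negbK => /eqP.
Qed.

Lemma hcomp_homog D f : is_homogP degP D (hcomp degP D f).
Proof.
move=> m; rewrite mcoeff_msupp hcompE.
by case: ifP => [/eqP h _|_]; [exact: h | rewrite eqxx].
Qed.

Lemma hcomp_lead le h m : is_lead le h m ->
  is_lead le (hcomp degP (degP m) h) m.
Proof.
move=> [mh hl]; split.
  by rewrite mcoeff_msupp hcompE eqxx -mcoeff_msupp.
move=> m'; rewrite mcoeff_msupp hcompE; case: ifP => _; last by rewrite eqxx.
by rewrite -mcoeff_msupp; exact: hl.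
Qed.

Lemma msuppXM w h : msupp ('X_[w] * h) =i [seq (w + m')%MM | m' <- msupp h].
Proof. by rewrite mulrC; apply: perm_mem; apply: msuppMX. Qed.

Lemma lead_shift le w h m0 : monomial_order le -> is_lead le h m0 ->
  is_lead le ('X_[w] * h) (w + m0)%MM.
Proof.
move=> [_ _ _ _ [_ lcomp]] [m0h hl]; split.
  by rewrite msuppXM; apply/mapP; exists m0.
move=> m'; rewrite msuppXM => /mapP [x xh ->].
by rewrite ![(w + _)%MM]addmC; apply: lcomp; exact: hl.
Qed.

Lemma homog_shift w D h : (forall m1 m2, degP (m1 + m2)%MM = degP m1 + degP m2) ->
  is_homogP degP D h -> is_homogP degP (degP w + D) ('X_[w] * h).
Proof.
move=> gD hh m; rewrite msuppXM => /mapP [x xh ->].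
by rewrite gD (hh _ xh).
Qed.

Local Notation mem_filterM := (@mem_filter (mpoly_multinom__canonical__eqtype_Equality n)).
Section Dims.
Variables (D : P) (L : seq 'X_{1..n}).
Hypothesis uL : uniq L.
Hypothesis hL : forall m, (m \in L) = (degP m == D).

Lemma dim_mchar (W : R -> Prop) A : mchar W A ->
  forall r, dim_ge (fun f => is_homogP degP D f /\ W f) r <->
            (r <= count (fun m => pb (A m)) L)%N.
Proof.
move=> hW r; split.
- case=> t [Vt ind]; rewrite -size_filter.
  apply: (GL_le (V := fun f => is_homogP degP D f /\ W f)
                (W := fun f => f = 0) _ _ _ _ _ Vt ind) => //.
  + by move=> a b c -> ->; rewrite scaler0 subr0.
  + move=> a b c [ha Wa] [hb Wb]; split; last exact: (mchar_closed hW).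
    by move=> m /msuppBZ [] ?; [exact: ha|exact: hb].
  + move=> v [hv Wv] nz.
    have [m mv] : exists m, m \in msupp v.
      have : msupp v != [::] by rewrite msupp_eq0; apply/eqP.
      by case: (msupp v) => [//|m s'] _; exists m; rewrite inE eqxx.
    exists m => //. rewrite mem_filterM hL (hv _ mv) eqxx andbT.
    by apply/pbP; exact: (hW v).1 Wv _ mv.
  + exact: filter_uniq.
- move=> hr; pose s := filter (fun m => pb (A m)) L.
  have hs : (r <= size s)%N by rewrite /s size_filter.
  have ms : forall i : 'I_r, nth 0%MM s i \in s.
    by move=> i; apply: mem_nth; apply: leq_trans hs.
  exists [tuple 'X_[nth 0%MM s i] | i < r]; split.
  + move=> i; rewrite tnth_mktuple; have := ms i.
    rewrite mem_filterM hL => /andP [/pbP Ai /eqP di].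
    split; last by apply/(mcharX _ hW).
    by move=> m; rewrite msuppX mem_seq1 => /eqP ->.
  + move=> c; under eq_bigr => i _ do rewrite tnth_mktuple.
    apply: (mono_indep (W := fun f => f = 0) (l := fun i : 'I_r => nth 0%MM s i)).
    * move=> i j /eqP; rewrite nth_uniq ?filter_uniq //;
        [by move/eqP/val_inj | exact: leq_trans (ltn_ord _) hs ..].
    * by move=> f -> i; rewrite msupp_zero.
Qed.

Lemma qdim_mchar (W : R -> Prop) A : mchar W A ->
  forall r, qdim_ge (is_homogP degP D) W r <->
            (r <= count (fun m => ~~ pb (A m)) L)%N.
Proof.
move=> hW r; split.
- case=> t [Vt ind]; rewrite -size_filter.
  apply: (GL_le (V := is_homogP degP D) (W := W) _ _ _ _ _ Vt ind).
  + exact: mchar0 hW.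
  + exact: mchar_closed hW.
  + by move=> a b c ha hb m /msuppBZ [] ?; [exact: ha|exact: hb].
  + move=> v hv nWv; apply: NNPP => H; apply: nWv; apply/hW => m mv.
    apply: NNPP => nA; apply: H; exists m => //.
    by rewrite mem_filterM hL (hv _ mv) eqxx andbT; apply/negP => /pbP.
  + exact: filter_uniq.
- move=> hr; pose s := filter (fun m => ~~ pb (A m)) L.
  have hs : (r <= size s)%N by rewrite /s size_filter.
  have ms : forall i : 'I_r, nth 0%MM s i \in s.
    by move=> i; apply: mem_nth; apply: leq_trans hs.
  exists [tuple 'X_[nth 0%MM s i] | i < r]; split.
  + move=> i; rewrite tnth_mktuple; have := ms i.
    rewrite mem_filterM hL => /andP [_ /eqP di].
    by move=> m; rewrite msuppX mem_seq1 => /eqP ->.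
  + move=> c; under eq_bigr => i _ do rewrite tnth_mktuple.
    apply: (mono_indep (W := W) (l := fun i : 'I_r => nth 0%MM s i)).
    * move=> i j /eqP; rewrite nth_uniq ?filter_uniq //;
        [by move/eqP/val_inj | exact: leq_trans (ltn_ord _) hs ..].
    * move=> f /hW Wf i; apply/negP => /Wf Ai.
      by have := ms i; rewrite mem_filterM => /andP [/negP + _]; apply; apply/pbP.
Qed.

Lemma dim_ideal le I : monoid_grading degP -> monomial_order le ->
  P_homogeneous_ideal degP I ->
  forall r, dim_ge (fun f => is_homogP degP D f /\ I f) r <->
            (r <= count (fun m => pb (AM (LM le I) m)) L)%N.
Proof.
move=> [g0 gD gdeg gcov] mo [[I0 ID IM] Ih] r.
have [lrefl lanti ltr ltot _] := mo.
have Ic : forall a b c, I a -> I b -> I (a - c *: b).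
  move=> a b c Ia Ib; rewrite -mul_mpolyC -mulNr.
  exact: ID Ia (IM _ _ Ib).
split.
- case=> t [Vt ind]; rewrite -size_filter.
  apply: (GL_le (V := fun f => is_homogP degP D f /\ I f)
                (W := fun f => f = 0) _ _ _ _ _ Vt ind) => //.
  + by move=> a b c -> ->; rewrite scaler0 subr0.
  + move=> a b c [ha Wa] [hb Wb]; split; last exact: Ic.
    by move=> m /msuppBZ [] ?; [exact: ha|exact: hb].
  + move=> v [hv Iv] nz; have nz' : v != 0 by apply/eqP.
    have [m [mv hm]] := lead_exists ltot ltr nz'.
    exists m => //. rewrite mem_filterM hL (hv _ mv) eqxx andbT; apply/pbP.
    by exists m; [exists v | exact: lepm_refl].
  + exact: filter_uniq.
- move=> hr; pose s := filter (fun m => pb (AM (LM le I) m)) L.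
  have hs : (r <= size s)%N by rewrite /s size_filter.
  have ms : forall i : 'I_r, nth 0%MM s i \in s.
    by move=> i; apply: mem_nth; apply: leq_trans hs.
  have hH : forall m, exists h, (degP m = D /\ AM (LM le I) m) ->
      [/\ I h, is_homogP degP D h & is_lead le h m].
    move=> m; case: (classic (degP m = D /\ AM (LM le I) m)); last first.
      by move=> nh; exists 0.
    case=> dm [m0 [h [Ih' nzh hlead]] m0m].
    pose h1 := hcomp degP (degP m0) h.
    have l1 := hcomp_lead hlead.
    exists ('X_[(m - m0)%MM] * h1) => _; split.
    * by apply: IM; apply: Ih.
    * have := homog_shift (w := (m - m0)%MM) gD (@hcomp_homog (degP m0) h).
      by rewrite -gD submK // dm.
    * by have := lead_shift (m - m0)%MM mo l1; rewrite submK.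
  pose H m := proj1_sig (constructive_indefinite_description _ (hH m)).
  have HP m : degP m = D /\ AM (LM le I) m ->
      [/\ I (H m), is_homogP degP D (H m) & is_lead le (H m) m].
    exact: (proj2_sig (constructive_indefinite_description _ (hH m))).
  have HPi : forall i : 'I_r,
      [/\ I (H (nth 0%MM s i)), is_homogP degP D (H (nth 0%MM s i))
        & is_lead le (H (nth 0%MM s i)) (nth 0%MM s i)].
    move=> i; apply: HP; have := ms i.
    by rewrite mem_filterM hL => /andP [/pbP Ai /eqP di].
  exists [tuple H (nth 0%MM s i) | i < r]; split.
  + by move=> i; rewrite tnth_mktuple; case: (HPi i).
  + move=> c; under eq_bigr => i _ do rewrite tnth_mktuple.
    apply: (GL_ge (le := le) (W := fun f => f = 0) (l := fun i : 'I_r => nth 0%MM s i)) => //.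
    * move=> i j /eqP; rewrite nth_uniq ?filter_uniq //;
        [by move/eqP/val_inj | exact: leq_trans (ltn_ord _) hs ..].
    * by move=> i; case: (HPi i).
    * by move=> f -> i; rewrite msupp_zero.
Qed.

End Dims.
End Orders.
Unset Implicit Arguments. Set Strict Implicit.
Lemma le_iff_eq (a b : nat) : (forall r, (r <= a)%N <-> (r <= b)%N) -> a = b.
Proof.
move=> h; apply/eqP; rewrite eqn_leq; apply/andP; split.
  exact: (h a).1 (leqnn a).
exact: (h b).2 (leqnn b).
Qed.

Lemma count_compl (T : Type) (a : pred T) s :
  (count a s + count (fun x => ~~ a x) s)%N = size s.
Proof. exact: count_predC. Qed.

Lemma count_split (T : Type) (a b : pred T) s : (forall x, a x -> b x) ->
  count b s = (count a s + count (fun x => b x && ~~ a x) s)%N.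
Proof.
move=> hab; elim: s => //= x s ->.
case ax: (a x); first by rewrite (hab _ ax) /=; lia.
by case: (b x) => /=; lia.
Qed.

Arguments count_compl {T} a s.
Arguments count_split {T a b} s _.

Theorem mainTheorem16 (k : fieldType) (n : nat) (P : nmodType)
    (degP : 'X_{1..n} -> P) (I : {mpoly k[n]} -> Prop)
    (le : rel 'X_{1..n}) (G : {group 'S_n}) (d : nat)
    (E : {set 'I_n}) (e1 : 'I_n) (Qgens : 'X_{1..n} -> Prop) :
  let Q := @monomial_ideal k n Qgens in
  monoid_grading degP ->
  P_homogeneous_ideal degP I ->
  monomial_order le ->
  acts_monomially G I d ->
  e1 \in E ->
  [transitive G, on E | 'P] ->
  (forall m, Qgens m -> (mdeg m <= d)%N) ->
  (forall f, Q f -> initial_ideal le I f) ->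
  (* (1) e_1 is a nonzerodivisor on R/Q *)
  (forall f, Q ('X_e1 * f) -> Q f) ->
  (* (2) *)
  (forall g, g \in G ->
     HS_quot_eq degP (Q) (perm_image g (Q))) ->
  (* (3) *)
  (forall D : P, exists a : 'I_n -> nat,
     dim_piece_eq degP (Q) I
       (D + \sum_(i in E) degP (mnm1 i) *+ a i)) ->
  forall f, Q f <-> initial_ideal le I f.
Proof.
move=> Q hg hI mo hmon e1E htr hdeg QJ nzd hHS h3.
have [g0 gD gdeg gcov] := hg.
have [[I0 ID IM] Ih] := hI.
have cover : forall D, exists L : seq 'X_{1..n},
    uniq L /\ forall m, (m \in L) = (degP m == D).
  move=> D; have [s hs] := gcov D.
  exists (filter (fun m => degP m == D) (undup s)); split.
    by rewrite filter_uniq ?undup_uniq.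
  move=> m; rewrite mem_filterM mem_undup.
  apply/andP/eqP => [[/eqP //]|dm]; split; [by apply/eqP | exact: hs].
pose L D := proj1_sig (constructive_indefinite_description _ (cover D)).
have LP D : uniq (L D) /\ forall m, (m \in L D) = (degP m == D).
  exact: (proj2_sig (constructive_indefinite_description _ (cover D))).
pose AQ := AM Qgens.
have QP : mchar Q AQ := @monomial_idealP k n Qgens.
have JP := initial_idealP le I.
pose AJ := AM (LM le I).
pose aQ := fun m => pb (AQ m).
pose aJ := fun m => pb (AJ m).
have QJm : forall m, AQ m -> AJ m.
  move=> m /(mcharX m QP) /QJ /(mcharX m JP); done.
have aQJ : forall m, aQ m -> aJ m.
  by move=> m /pbP /QJm /pbP.
pose K D := count (fun m => aJ m && ~~ aQ m) (L D).
have dimJ : forall le', monomial_order le' -> forall D r,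
    dim_ge (fun f => is_homogP degP D f /\ I f) r <->
    (r <= count (fun m => pb (AM (LM le' I) m)) (L D))%N.
  by move=> le' mo' D; apply: (dim_ideal (LP D).1 (LP D).2 hg mo' hI).
have gQJ : forall g, g \in G -> forall m, AQ (mp g m) -> AM (LM (le_g le g) I) m.
  move=> g gG m [q Gq qm].
  have [m0 [h [Ih' nzh hl]] m0q] := QJm q (ex_intro2 _ _ q Gq (lepm_refl q)).
  pose h1 := hcomp degP (degP m0) h.
  have l1 : is_lead le h1 m0 := hcomp_lead degP hl.
  have I1 : I h1 := Ih _ _ Ih'.
  have sz : (msize h1 <= d.+1)%N.
    rewrite msizeE; apply/bigmax_leqP_seq => x xh _; rewrite ltnS.
    have := @hcomp_homog _ _ _ degP (degP m0) h x xh => /gdeg ->.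
    apply: leq_trans (hdeg _ Gq).
    by rewrite -(submK m0q) mdegD leq_addl.
  have [h' [Ih'' eqs]] := hmon h1 g I1 sz gG.
  have lg := lead_msym (g := g) l1 eqs.
  exists (mp g^-1 m0).
    exists h'; split => //.
    by apply/eqP => h0; move: lg.1; rewrite h0 msupp_zero.
  apply/mnm_lepP => j; rewrite mpE.
  have := mnm_lepP m0q (g^-1 j)%g; have := mnm_lepP qm (g^-1 j)%g.
  rewrite mpE permKV; lia.
have nzdg : forall g, g \in G -> forall m,
    AQ (mp g (U_(g e1) + m)%MM) -> AQ (mp g m).
  move=> g gG m; rewrite mpD.
  have -> : mp g (U_(g e1))%MM = U_(e1)%MM.
    by apply/mnmP => j; rewrite mpE !mnm1E (inj_eq perm_inj).
  move=> h; apply/(mcharX _ QP); apply: nzd.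
  by rewrite -mpolyXD; apply/(mcharX _ QP).
have Kmono : forall i, i \in E -> forall D, (K D <= K (D + degP U_(i)%MM)%R)%N.
  move=> i iE D.
  have := iE; rewrite -(atransP htr e1 e1E) => /orbitP [g gG] /=; rewrite apermE => gi.
  pose aJg := fun m => pb (AM (LM (le_g le g) I) m).
  pose agQ := fun m => pb (AQ (mp g m)).
  have agQJ : forall m, agQ m -> aJg m by move=> m /pbP /(gQJ g gG) /pbP.
  have cJ : forall D, count aJ (L D) = count aJg (L D).
    move=> D0; apply: le_iff_eq => r.
    rewrite -(dimJ le mo D0 r); exact: (dimJ _ (monomial_order_g g mo) D0 r).
  have cQ : forall D, count aQ (L D) = count agQ (L D).
    move=> D0; have := count_compl aQ (L D0); have := count_compl agQ (L D0).
    have -> : count (fun x => ~~ agQ x) (L D0) = count (fun x => ~~ aQ x) (L D0).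
      apply: le_iff_eq => r.
      rewrite -(qdim_mchar (LP D0).1 (LP D0).2 (perm_imageP g QP)).
      rewrite -(qdim_mchar (LP D0).1 (LP D0).2 QP).
      by split => /(hHS g gG D0 r).
    lia.
  have sJ := fun D0 => count_split (L D0) aQJ.
  have sJg := fun D0 => count_split (L D0) agQJ.
  have inj : (count (fun m => aJg m && ~~ agQ m) (L D) <=
              count (fun m => aJg m && ~~ agQ m) (L (D + degP U_(i)%MM)%R))%N.
    rewrite -!size_filter.
    rewrite -(size_map (fun m => (U_(i) + m)%MM)).
    apply: uniq_leq_size.
      rewrite map_inj_uniq ?filter_uniq ?(LP D).1 //.
      by move=> x y /addmI.
    move=> x /mapP [y]; rewrite mem_filterM => /andP [/andP [hJ hQ] yL] ->.
    rewrite mem_filterM (LP _).2 gD addrC.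
    rewrite (LP D).2 in yL; rewrite (eqP yL) eqxx andbT.
    apply/andP; split.
      move/pbP: hJ => [m0 lm m0y]; apply/pbP; exists m0 => //.
      by apply: lepm_trans m0y _; apply: lem_addl.
    apply/negP => /pbP; rewrite -gi => /(nzdg g gG) /pbP.
    by move=> hh; move: hQ; rewrite /agQ hh.
  rewrite /K.
  have := sJ D; have := sJ (D + degP U_(i)%MM).
  have := sJg D; have := sJg (D + degP U_(i)%MM).
  rewrite !cJ !cQ; lia.
have Kiter : forall x, (forall D, (K D <= K (D + x)%R)%N) ->
    forall j D, (K D <= K (D + x *+ j)%R)%N.
  move=> x hx; elim=> [|j IH] D; first by rewrite mulr0n addr0.
  by rewrite mulrSr addrA; apply: leq_trans (IH D) (hx _).
have Ksum : forall a D, (K D <= K (D + \sum_(i in E) degP U_(i)%MM *+ a i)%R)%N.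
  move=> a; apply: (big_ind (fun x => forall D, (K D <= K (D + x)%R)%N)).
  - by move=> D; rewrite addr0.
  - by move=> x y hx hy D; rewrite addrA; apply: leq_trans (hx D) (hy _).
  - by move=> i iE; apply: Kiter; apply: Kmono.
move=> f; split; first exact: QJ.
move=> Jf; apply: NNPP => nQ.
have [m mf nAQ] : exists2 m, m \in msupp f & ~ AQ m.
  apply: NNPP => H; apply: nQ; apply/QP => m mf; apply: NNPP => nA.
  by apply: H; exists m.
have AJm : AJ m := (JP f).1 Jf m mf.
pose D := degP m.
have [a ha] := h3 D.
pose D' := D + \sum_(i in E) degP (mnm1 i) *+ a i.
have K1 : (0 < K D)%N.
  rewrite -has_count; apply/hasP; exists m; first by rewrite (LP D).2.
  by rewrite /aJ /aQ; apply/andP; split; [apply/pbP | apply/negP => /pbP].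
have K0 : K D' = 0%N.
  have e : count aQ (L D') = count aJ (L D').
    apply: le_iff_eq => r.
    rewrite -(dim_mchar (LP D').1 (LP D').2 QP) -(dimJ le mo D' r).
    exact: ha.
  have := count_split (L D') aQJ; rewrite -e /K; lia.
have := Ksum a D; rewrite -/D' K0; lia.
Qed.
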